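(* Let $k\ge 2$ be an even integer. In the maximum-cardinality online bipartite matching problem under vertex arrivals with a hard budget of $k$ reassignments per arrival (defined in the context), the shortest-augmenting-path algorithm described in the context is $(1-\frac{2}{k+2})$-competitive: on every instance, the matching it outputs has cardinality at least $(1-\frac{2}{k+2})\cdot\mathsf{OPT}$, where $\mathsf{OPT}$ is the maximum cardinality of a matching in the revealed graph.
   Context: Problem: There is a bipartite graph $G=(L\cup R,E)$. The algorithm initially knows only $R$ and the budget $k$. Over $|L|$ timesteps, the vertices of $L$ arrive one at a time; when a vertex arrives, all its incident edges are revealed. At the end of each timestep the algorithm must output a matching in the graph revealed so far. The new matching $M_2$ must be obtainable from the previous matching $M_1$ (the empty matching before the first timestep) by at most $k$ (re)assignments, where the number of (re)assignments is the number of vertices having nonzero degree in $M_1\triangle M_2$ (each vertex whose partner changes counts once). Moreover, once a vertex is matched it must remain matched at all later timesteps. A matching's size is its number of edges. Given a matching $M$, a vertex is exposed if no edge of $M$ is incident to it; an augmenting path with respect to $M$ is a path between two distinct exposed vertices whose edges alternate between edges not in $M$ and edges in $M$; its length is its number of edges. Algorithm: when a vertex $u$ arrives, among all augmenting paths in the current graph with respect to the current matching $M$ that contain $u$, choose a shortest one $P$; if no such path exists or its length exceeds $k-1$, keep $M$; otherwise output $M\triangle P$. *)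

(* Defs.v *)
From mathcomp Require Import all_boot all_order all_algebra.
Set Implicit Arguments. Unset Strict Implicit. Unset Printing Implicit Defensive.

(* Online bipartite matching with vertex arrivals.
   L = 'I_n (vertex t is the (t+1)-th arriving vertex), R : finType,
   E u r  <=>  {u, r} is an edge of G.  Edges are pairs (u, r). *)
Section Online.
Variables (n : nat) (R : finType) (E : 'I_n -> R -> bool).

Definition edge := ('I_n * R)%type.
Definition vert := ('I_n + R)%type.

Definition revealed (t : nat) (e : edge) : bool := (e.1 < t) && E e.1 e.2.

Definition incident (e : edge) (x : vert) : bool :=
  match x with inl u => e.1 == u | inr r => e.2 == r end.

Definition is_matching (t : nat) (M : {set edge}) : bool :=
  [forall e in M, revealed t e] &&
  [forall e1 in M, forall e2 in M, (e1 != e2) ==> (e1.1 != e2.1) && (e1.2 != e2.2)].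

Definition exposed (M : {set edge}) (x : vert) : bool :=
  [forall e in M, ~~ incident e x].

Definition edge_of (x y : vert) : option edge :=
  match x, y with
  | inl u, inr r => Some (u, r)
  | inr r, inl u => Some (u, r)
  | _, _ => None
  end.

Fixpoint alternating (t : nat) (M : {set edge}) (b : bool) (x : vert) (p : seq vert) : bool :=
  match p with
  | [::] => true
  | y :: p' =>
      match edge_of x y with
      | Some e => [&& revealed t e, (e \in M) == b & alternating t M (~~ b) y p']
      | None => false
      end
  end.

Fixpoint path_edges (x : vert) (p : seq vert) : seq edge :=
  match p with
  | [::] => [::]
  | y :: p' =>
      match edge_of x y with
      | Some e => e :: path_edges y p'
      | None => path_edges y p'
      end
  end.

(* Its length is size p. *)
Definition augmenting (t : nat) (M : {set edge}) (x : vert) (p : seq vert) : bool :=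
  [&& p != [::], uniq (x :: p), exposed M x, exposed M (last x p)
    & alternating t M false x p].

Definition contains (x : vert) (p : seq vert) (v : vert) : bool := v \in x :: p.

Definition symdiff (A B : {set edge}) : {set edge} := (A :\: B) :|: (B :\: A).

(* One step of the algorithm upon the arrival of vertex t (graph revealed
   after t.+1 arrivals): M' is a possible output given current matching M. *)
Definition alg_step (k : nat) (t : 'I_n) (M M' : {set edge}) : Prop :=
  let u := (inl t : vert) in
  (exists x p,
      [/\ augmenting t.+1 M x p, contains x p u,
          (forall x' p', augmenting t.+1 M x' p' -> contains x' p' u ->
                         size p <= size p'),
          size p <= k - 1
        & M' = symdiff M [set e in path_edges x p]])
  \/
  ((forall x p, augmenting t.+1 M x p -> contains x p u -> k - 1 < size p)
   /\ M' = M).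

(* Ms is a run of the algorithm: Ms 0 is empty, Ms t.+1 is the output at the
   end of timestep t+1. *)
Definition alg_run (k : nat) (Ms : nat -> {set edge}) : Prop :=
  Ms 0 = set0 /\ forall t : 'I_n, alg_step k t (Ms t) (Ms t.+1).

Definition OPT (t : nat) : nat := \max_(M : {set edge} | is_matching t M) #|M|.

End Online.

(* Main.v *)
Require Import Defs.
From mathcomp Require Import all_boot all_order all_algebra.
From mathcomp Require Import zify ring.
Import Order.TTheory GRing.Theory Num.Theory.
Set Implicit Arguments. Unset Strict Implicit. Unset Printing Implicit Defensive.

Section Aux.
Variables (n : nat) (R : finType) (E : 'I_n -> R -> bool).
Local Notation edge := (edge n R).
Local Notation vert := (vert n R).

Lemma edge_ofP (x y : vert) e : edge_of x y = Some e ->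
  [/\ incident e x, incident e y, x != y & forall v, incident e v -> v = x \/ v = y].
Proof.
case: x => [u|r]; case: y => [u'|r'] //= [<-] /=; split; rewrite ?eqxx //;
  case=> [w|w] /= /eqP ->; auto.
Qed.

Lemma edge_at (e : edge) (v : vert) : incident e v -> exists w, edge_of v w = Some e.
Proof.
case: e => u r; case: v => [u'|r'] /= /eqP <-; [exists (inr r) | exists (inl u)]; by [].
Qed.

Definition mpair (S : {set edge}) := forall e1 e2 (v : vert), e1 \in S -> e2 \in S ->
  incident e1 v -> incident e2 v -> e1 = e2.

Lemma mpair_sub (A B : {set edge}) : A \subset B -> mpair B -> mpair A.
Proof. move=> /subsetP sAB H e1 e2 v h1 h2; apply: H; by apply: sAB. Qed.

Lemma is_matchingP t S : is_matching E t S <-> (forall e, e \in S -> revealed E t e) /\ mpair S.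
Proof.
rewrite /is_matching; split.
- move=> /andP [/forall_inP H1 /forall_inP H2]; split => // e1 e2 v h1 h2 i1 i2.
  apply/eqP; apply/negPn/negP => ne.
  have := implyP (forall_inP (H2 e1 h1) e2 h2) ne => /andP [a b].
  case: v i1 i2 => [u|r] /= /eqP x /eqP y.
  + by rewrite x y eqxx in a.
  + by rewrite x y eqxx in b.
- move=> [H1 H2]; apply/andP; split; first by apply/forall_inP.
  apply/forall_inP => e1 h1; apply/forall_inP => e2 h2; apply/implyP => ne.
  apply/andP; split; apply/negP => /eqP eq; move/eqP: ne; apply.
  + by apply: (H2 _ _ (inl e1.1)) => //=; rewrite ?eq eqxx.
  + by apply: (H2 _ _ (inr e1.2)) => //=; rewrite ?eq eqxx.
Qed.

Lemma in_symdiff (A B : {set edge}) e : (e \in symdiff A B) = (e \in A) (+) (e \in B).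
Proof. by rewrite /symdiff !inE; case: (e \in A); case: (e \in B). Qed.

Fixpoint altp (P : bool -> edge -> bool) (b : bool) (x : vert) (p : seq vert) : bool :=
  match p with
  | [::] => true
  | y :: p' => match edge_of x y with
              | Some e => P b e && altp P (~~ b) y p'
              | None => false end
  end.

Lemma alternatingE t M b x p : alternating E t M b x p =
  altp (fun b e => revealed E t e && ((e \in M) == b)) b x p.
Proof. elim: p b x => //= y p IH b x; case: edge_of => // e; by rewrite IH andbA. Qed.

Lemma altp_mono (P Q : bool -> edge -> bool) b x p : (forall c e, P c e -> Q c e) ->
  altp P b x p -> altp Q b x p.
Proof.
move=> H; elim: p b x => //= y p IH b x; case: edge_of => // e /andP[h1 h2].
by rewrite (H _ _ h1) (IH _ _ h2).
Qed.

Lemma altp_neg (P : bool -> edge -> bool) b x p :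
  altp P b x p -> altp (fun c e => P (~~ c) e) (~~ b) x p.
Proof.
elim: p b x => //= y p IH b x; case: edge_of => // e /andP[h1 h2].
by rewrite negbK h1 /=; have := IH _ _ h2; rewrite negbK.
Qed.

Lemma altp_size P b x p : altp P b x p -> size (path_edges x p) = size p.
Proof. elim: p b x => //= y p IH b x; case: edge_of => // e /andP[_ h]; by rewrite /= (IH _ _ h). Qed.

Lemma altp_in P b x p e : altp P b x p -> e \in path_edges x p -> exists c, P c e.
Proof.
elim: p b x => //= y p IH b x; case: edge_of => // e' /andP[h1 h2].
rewrite inE => /orP [/eqP -> | h]; [by exists b | exact: IH h2 h].
Qed.

Lemma altp_nth P b x p (x0 : vert) (e0 : edge) i : altp P b x p -> i < size p ->
  edge_of (nth x0 (x::p) i) (nth x0 (x::p) i.+1) = Some (nth e0 (path_edges x p) i)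
  /\ P (b (+) odd i) (nth e0 (path_edges x p) i).
Proof.
elim: p b x i => //= y p IH b x [|i]; case E0: edge_of => [e|] // /andP[h1 h2] hi /=.
- by rewrite addbF.
- have [h3 h4] := IH _ _ i h2 hi; split => //.
  by move: h4; rewrite addNb addbN.
Qed.

Lemma altp_rcons P b x p w : altp P b x (rcons p w) =
  altp P b x p && (if edge_of (last x p) w is Some e then P (b (+) odd (size p)) e else false).
Proof.
elim: p b x => [|y p IH] b x /=.
  by case: edge_of => [e|]; rewrite ?addbF ?andbT.
case: edge_of => [e|] //. by rewrite IH andbA /= addNb addbN.
Qed.

Lemma altp_count (P : bool -> edge -> bool) b x p (S : pred edge) (c0 : bool) :
  (forall c e, P c e -> S e = (c == c0)) -> altp P b x p ->
  count S (path_edges x p) = if b == c0 then (size p).+1./2 else (size p)./2.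
Proof.
move=> HS; elim: p b x => [|y p IH] b x /=; first by case: ifP.
case: edge_of => // e /andP[h1 h2] /=; rewrite (IH _ _ h2) (HS _ _ h1).
have -> : (~~ b == c0) = ~~ (b == c0) by case: (b); case: (c0).
by case: (b == c0).
Qed.

End Aux.

Section Paths.
Variables (n : nat) (R : finType).
Local Notation edge := (edge n R).
Local Notation vert := (vert n R).
Variables (P : bool -> edge -> bool) (b : bool) (x : vert) (p : seq vert).
Hypothesis hP : altp P b x p.
Local Notation s := (x :: p).
Local Notation pes := (path_edges x p).

Lemma pe_inc (e0 : edge) i v : i < size p -> incident (nth e0 pes i) v ->
  v = nth x s i \/ v = nth x s i.+1.
Proof. move=> hi; have [h _] := altp_nth x e0 hP hi; have [_ _ _ H] := edge_ofP h; exact: H. Qed.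

Lemma pe_inc2 (e0 : edge) m i : m < size p -> (i == m) || (i == m.+1) ->
  incident (nth e0 pes m) (nth x s i).
Proof.
move=> hm hi; have [h _] := altp_nth x e0 hP hm; have [h1 h2 _ _] := edge_ofP h.
by case/orP: hi => /eqP ->.
Qed.

Lemma pe_type (e0 : edge) m : m < size p -> P (b (+) odd m) (nth e0 pes m).
Proof. by move=> hm; have [_ h] := altp_nth x e0 hP hm. Qed.

Hypothesis hu : uniq s.

Lemma pe_at (e0 : edge) m i : m < size p -> i <= size p ->
  incident (nth e0 pes m) (nth x s i) -> (i == m) || (i == m.+1).
Proof.
move=> hm hi /(pe_inc hm) [] /eqP; rewrite nth_uniq //=. all: try (move=> /eqP ->; by rewrite ?eqxx ?orbT). by rewrite ltnS ltnW.
Qed.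

Lemma mem_pathP v : reflect (exists2 i, i <= size p & v = nth x s i) (v \in s).
Proof.
apply: (iffP (nthP x)) => [[i hi <-]|[i hi ->]]; exists i => //.
Qed.

Lemma pes_nth (e0 : edge) e : e \in pes -> exists2 m, m < size p & e = nth e0 pes m.
Proof.
move/(nthP e) => [m hm <-]; exists m; first by rewrite -(altp_size hP).
by rewrite (set_nth_default e0).
Qed.

Lemma uniq_pes : uniq pes.
Proof.
case Hs: pes => [|e0 s'] //; rewrite -Hs.
apply/(uniqP e0) => i j; rewrite !inE (altp_size hP) => hi hj eq.
have h1 : incident (nth e0 pes j) (nth x s j) by apply: pe_inc2; rewrite // eqxx.
have h2 : incident (nth e0 pes j) (nth x s j.+1) by apply: pe_inc2; rewrite // eqxx orbT.
rewrite -eq in h1 h2.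
move/(pe_at hi (ltnW hj)): h1; move/(pe_at hi hj): h2; lia.
Qed.

Lemma card_pes : #|[set e in pes]| = size p.
Proof. by rewrite cardsE; have /card_uniqP -> := uniq_pes; rewrite (altp_size hP). Qed.

Lemma card_pesI (S : {set edge}) : #|[set e in pes] :&: S| = count (mem S) pes.
Proof.
have -> : [set e in pes] :&: S = [set e in filter (mem S) pes].
  by apply/setP => e; rewrite !inE mem_filter andbC.
by rewrite cardsE; have /card_uniqP -> := filter_uniq (mem S) uniq_pes; rewrite size_filter.
Qed.

End Paths.

Lemma par_eq i m1 m2 : (i == m1) || (i == m1.+1) -> (i == m2) || (i == m2.+1) ->
  odd m1 = odd m2 -> m1 = m2.
Proof.
move=> /orP[]/eqP-> /orP[]/eqP h //.
- by rewrite h /=; case: (odd m2).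
- by rewrite -h /=; case: (odd m1).
- by case: h.
Qed.

Lemma nth_lastE (T : Type) (x : T) p : nth x (x :: p) (size p) = last x p.
Proof. by have := nth_last x (x :: p). Qed.

Section Sym.
Variables (n : nat) (R : finType).
Local Notation edge := (edge n R).
Local Notation vert := (vert n R).

Lemma symdiff_path_mpair (S : {set edge}) b (x : vert) p :
  mpair S -> uniq (x :: p) -> altp (fun c e => (e \in S) == c) b x p ->
  (forall e, e \in S -> incident e x || incident e (last x p) -> e \in path_edges x p) ->
  mpair (symdiff S [set e in path_edges x p]).
Proof.
move=> hS hu hP hend.
have key : forall e1 e2 v, e1 \in S -> e1 \notin path_edges x p ->
    e2 \in path_edges x p -> e2 \notin S -> incident e1 v -> incident e2 v -> False.
  move=> e1 e2 v h1 h1' h2 h2' i1 i2.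
  have [m hm Hm] := pes_nth hP e1 h2.
  rewrite Hm in i2.
  have [i [hi hmi hv]] : exists i, [/\ i <= size p, (i == m) || (i == m.+1) & v = nth x (x :: p) i].
    case: (pe_inc hP hm i2) => ->; [exists m | exists m.+1]; split; rewrite ?eqxx ?orbT //; lia.
  subst v.
  have [h0|h0] := boolP ((i == 0) || (i == size p)).
    move/negP: h1'; apply; apply: hend => //.
    case/orP: h0 => /eqP hi0; rewrite hi0 /= in i1; first by rewrite i1.
    by rewrite nth_lastE in i1; rewrite i1 orbT.
  pose m' := if b (+) odd i then i else i.-1.
  have hm' : m' < size p by rewrite /m'; case: ifP; lia.
  have him' : (i == m') || (i == m'.+1) by rewrite /m'; case: ifP => _; [rewrite eqxx | ]; lia.
  have hty := pe_type hP e1 hm'.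
  have hin : nth e1 (path_edges x p) m' \in S.
    move/eqP: hty ->; rewrite /m'; case: ifP => // hb.
    have -> : odd i.-1 = ~~ odd i by case: (i) h0 => // i' _ /=; rewrite negbK.
    by rewrite addbN hb.
  have := hS _ _ _ h1 hin i1 (pe_inc2 hP e1 hm' him') => eq.
  move/negP: h1'; apply; rewrite eq mem_nth // (altp_size hP) //.
move=> e1 e2 v; rewrite !in_symdiff !inE.
case h1S: (e1 \in S); case h1p: (e1 \in path_edges x p);
case h2S: (e2 \in S); case h2p: (e2 \in path_edges x p) => //= _ _ i1 i2.
- exact: hS i1 i2.
- by case: (key _ _ _ h1S (negbT h1p) h2p (negbT h2S) i1 i2).
- by case: (key _ _ _ h2S (negbT h2p) h1p (negbT h1S) i2 i1).
- have [m1 hm1 Hm1] := pes_nth hP e1 h1p.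
  have [m2 hm2 Hm2] := pes_nth hP e1 h2p.
  rewrite Hm1 in i1; rewrite Hm2 in i2.
  have [i [hi hmi hv]] : exists i, [/\ i <= size p, (i == m1) || (i == m1.+1) & v = nth x (x :: p) i].
    case: (pe_inc hP hm1 i1) => ->; [exists m1 | exists m1.+1]; split; rewrite ?eqxx ?orbT //; lia.
  rewrite hv in i2.
  have hmi2 := pe_at hP hu hm2 hi i2.
  have t1 := pe_type hP e1 hm1; have t2 := pe_type hP e1 hm2.
  rewrite -Hm1 h1S in t1; rewrite -Hm2 h2S in t2.
  have : odd m1 = odd m2 by move: t1 t2; case: (b); case: (odd m1); case: (odd m2).
  move/(par_eq hmi hmi2) => em; by rewrite Hm1 Hm2 em.
Qed.

Lemma card_symdiff_path (P : bool -> edge -> bool) (S : {set edge}) b (x : vert) p :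
  uniq (x :: p) -> altp P b x p ->
  #|symdiff S [set e in path_edges x p]| + count (mem S) (path_edges x p) =
  #|S| + (size p - count (mem S) (path_edges x p)).
Proof.
move=> hu hP.
set Ep := [set e in path_edges x p].
have c1 : #|Ep| = size p := card_pes hP hu.
have c2 : #|Ep :&: S| = count (mem S) (path_edges x p) := card_pesI hP hu S.
have c3 : #|S :\: Ep| = #|S| - #|Ep :&: S| by rewrite cardsD setIC.
have c4 : #|Ep :\: S| = #|Ep| - #|Ep :&: S| by rewrite cardsD.
have c5 : #|Ep :&: S| <= #|S| by apply: subset_leq_card; apply: subsetIr.
have c6 : #|Ep :&: S| <= #|Ep| by apply: subset_leq_card; apply: subsetIl.
have c7 : #|symdiff S Ep| = #|S :\: Ep| + #|Ep :\: S|.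
  rewrite /symdiff cardsU.
  suff -> : (S :\: Ep) :&: (Ep :\: S) = set0 by rewrite cards0 subn0.
  by apply/setP => e; rewrite !inE; case: (e \in S); case: (e \in Ep); rewrite ?andbF.
lia.
Qed.

End Sym.

Lemma find_m j i c : i <= j ->
  (exists m, [/\ m < j, odd m = c & (i == m) || (i == m.+1)]) \/ (i = j /\ odd j = c) \/ (i = 0 /\ c = true).
Proof.
move=> hij.
case hc: (odd i == c).
  case: (ltnP i j) => hi.
    by left; exists i; rewrite hi (eqP hc) eqxx.
  by right; left; split; [lia | rewrite -(eqP hc); congr odd; lia].
case: i hij hc => [|i] hij hc.
  by right; right; split => //; case: c hc.
left; exists i; split; [lia | | by rewrite eqxx orbT].
by move: hc => /=; case: (odd i); case: c.
Qed.

Section Core.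
Variables (n : nat) (R : finType).
Local Notation edge := (edge n R).
Local Notation vert := (vert n R).

Definition TP (D F : {set edge}) (c : bool) (e : edge) : bool := e \in (if c then D else F).

Section Stuck.
Variables (D F : {set edge}).
Hypotheses (hD : mpair D) (hF : mpair F) (hdis : forall e, e \in D -> e \in F -> False).
Variables (a : vert) (q : seq vert).
Hypotheses (hP : altp (TP D F) false a q) (hu : uniq (a :: q)).

Lemma at_vertex i c e m : m < size q -> odd m = c -> (i == m) || (i == m.+1) ->
  e \in (if c then D else F) -> incident e (nth a (a :: q) i) ->
  e = nth e (path_edges a q) m.
Proof.
move=> hm hc him he hi.
have ht := pe_type hP e hm; rewrite /TP /= hc in ht.
have hi2 := pe_inc2 hP e hm him.
by case: (c) he ht => he ht; [exact: hD he ht hi hi2 | exact: hF he ht hi hi2].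
Qed.

Hypothesis ha : forall e, e \in D -> ~~ incident e a.

Lemma closure_stuck :
  (forall e, e \in (if odd (size q) then D else F) -> ~~ incident e (last a q)) ->
  forall v e c, v \in a :: q -> e \in (if c then D else F) -> incident e v ->
  e \in path_edges a q.
Proof.
move=> hz v e c /(mem_pathP) [i hi ->] he hinc.
case: (find_m c hi) => [[m [hm hc him]] | [[hi' hc] | [hi0 hc]]].
- rewrite (at_vertex hm hc him he hinc) mem_nth // (altp_size hP) //.
- rewrite hi' nth_lastE in hinc; rewrite hc in hz.
  by move: (hz e he); rewrite hinc.
- rewrite hi0 /= in hinc; rewrite hc in he.
  by move: (ha he); rewrite hinc.
Qed.

Lemma ext_stuck : (forall w, ~~ (uniq (a :: rcons q w) && altp (TP D F) false a (rcons q w))) ->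
  forall e, e \in (if odd (size q) then D else F) -> ~~ incident e (last a q).
Proof.
move=> hst e he; apply/negP => hinc.
have [w hw] := edge_at hinc.
have [_ iw nzw _] := edge_ofP hw.
move/negP: (hst w); apply; apply/andP; split; last first.
  by rewrite altp_rcons hP hw /TP /=.
rewrite -rcons_cons rcons_uniq hu andbT.
apply/negP => /(mem_pathP) [i hi hwi].
rewrite hwi in iw nzw.
case: (find_m (odd (size q)) hi) => [[m [hm hc him]] | [[hi' hc] | [hi0 hc]]].
- have eq := at_vertex hm hc him he iw.
  rewrite eq -nth_lastE in hinc.
  have := pe_at hP hu hm (leqnn _) hinc.
  move=> h; have hsm : size q = m.+1 by lia.
  by move: hc; rewrite hsm /=; case: (odd m).
- by rewrite hi' nth_lastE eqxx in nzw.
- rewrite hi0 /= in iw; rewrite hc in he.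
  by move: (ha he); rewrite iw.
Qed.

End Stuck.

Lemma extend (cand : seq vert -> bool) (a : vert) q0 : cand q0 ->
  (forall q, cand q -> uniq (a :: q)) ->
  exists q, [/\ cand q, size q0 <= size q & forall w, ~~ cand (rcons q w)].
Proof.
move=> c0 hu.
suff H : forall k q, cand q -> #|{: ('I_n + R)%type}| - size q <= k ->
    exists q', [/\ cand q', size q <= size q' & forall w, ~~ cand (rcons q' w)].
  exact: (H _ q0 c0 (leqnn _)).
have hb : forall s : seq vert, uniq s -> size s <= #|{: ('I_n + R)%type}|.
  by move=> s /card_uniqP <-; exact: max_card.
elim=> [|k IH] q cq hk.
- exists q; split => // w; apply/negP => cw.
  have := hb _ (hu _ cw); rewrite /= size_rcons; lia.
- case: (boolP [forall w, ~~ cand (rcons q w)]) => [/forallP H | /forallPn [w0 /negPn cw]].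
    by exists q; split.
  have := hb _ (hu _ cw); rewrite /= size_rcons => hmax.
  have [q' [c' s' st']] := IH _ cw (ltac:(rewrite size_rcons; lia)).
  exists q'; split => //; move: s'; rewrite size_rcons; lia.
Qed.

End Core.

Section Core2.
Variables (n : nat) (R : finType).
Local Notation edge := (edge n R).
Local Notation vert := (vert n R).

Lemma mpair_card_fst (S : {set edge}) : mpair S -> #|[set e.1 | e in S]| = #|S|.
Proof.
move=> H; apply: card_in_imset => e1 e2 h1 h2 eq.
by apply: (H _ _ (inl e1.1)) => //=; rewrite ?eq eqxx.
Qed.

Lemma core (m : nat) : forall D F : {set edge}, #|F| <= m -> mpair D -> mpair F ->
  (forall e, e \in D -> e \in F -> False) -> #|D| < #|F| ->
  exists (a : vert) q, [/\ q != [::], uniq (a :: q), altp (TP D F) false a q, odd (size q) &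
    forall v e c, v \in a :: q -> e \in (if c then D else F) -> incident e v ->
    e \in path_edges a q].
Proof.
elim: m => [|m IH] D F hm hD hF hdis hlt; first by lia.
have : ~~ ([set e.1 | e in F] \subset [set e.1 | e in D]).
  apply/negP => /subset_leq_card; rewrite !mpair_card_fst //; lia.
case/subsetPn => i /imsetP [[i' r] heF ->] hiD /=.
set a : vert := inl i'.
have ha : forall e, e \in D -> ~~ incident e a.
  move=> e he; apply/negP => /= /eqP hi; move/negP: hiD; apply.
  by apply/imsetP; exists e.
pose cand (q : seq vert) := uniq (a :: q) && altp (TP D F) false a q.
have c0 : cand [:: inr r] by rewrite /cand /= /TP /= heF.
have [q [/andP [hu hP] hsz hst]] := extend c0 (fun q h => proj1 (andP h)).
have hq : q != [::] by move: hsz; case: (q).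
have hz := ext_stuck hD hF hP hu ha hst.
have hcl := closure_stuck hD hF hP ha hz.
case ho: (odd (size q)).
  by exists a, q; split.
(* remove the even component and recurse *)
set Ep := [set e in path_edges a q].
set D' := D :\: Ep; set F' := F :\: Ep.
have cF : count (mem F) (path_edges a q) = (size q).+1./2.
  rewrite (@altp_count _ _ (TP D F) false a q (mem F) false) //.
  move=> c e; rewrite /TP; case: (c) => /= he; last by rewrite he.
  by apply/negbTE/negP => hf; exact: hdis he hf.
have cD : count (mem D) (path_edges a q) = (size q)./2.
  rewrite (@altp_count _ _ (TP D F) false a q (mem D) true) //.
  move=> c e; rewrite /TP; case: (c) => /= he; first by rewrite he.
  by apply/negbTE/negP => hd; exact: hdis hd he.
have cF' : #|F'| = #|F| - count (mem F) (path_edges a q).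
  by rewrite /F' cardsD setIC (card_pesI hP hu).
have cD' : #|D'| = #|D| - count (mem D) (path_edges a q).
  by rewrite /D' cardsD setIC (card_pesI hP hu).
have lF : count (mem F) (path_edges a q) <= #|F|.
  by rewrite -(card_pesI hP hu); apply: subset_leq_card; apply: subsetIr.
have lD : count (mem D) (path_edges a q) <= #|D|.
  by rewrite -(card_pesI hP hu); apply: subset_leq_card; apply: subsetIr.
have s1 : 0 < size q by move: hq; case: (q).
have [a' [q' [hq' hu' hP' ho' hcl']]] :
  exists (a : vert) q, [/\ q != [::], uniq (a :: q), altp (TP D' F') false a q, odd (size q) &
    forall v e c, v \in a :: q -> e \in (if c then D' else F') -> incident e v ->
    e \in path_edges a q].
  apply: IH.
  - lia.
  - by apply: mpair_sub hD; apply: subsetDl.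
  - by apply: mpair_sub hF; apply: subsetDl.
  - by move=> e; rewrite !inE => /andP [_ h1] /andP [_ h2]; apply: hdis h1 h2.
  - lia.
exists a', q'; split => //.
  by apply: altp_mono hP' => c e; rewrite /TP; case: (c); rewrite !inE => /andP[].
move=> v e c hv he hinc.
case hE : (e \in Ep); last first.
  apply: (hcl' v e c hv) => //; case: (c) he => he; by rewrite in_setD hE.
exfalso.
have hE' : e \in path_edges a q by move: hE; rewrite /Ep inE.
have [m0 hm0 hm'] := pes_nth hP e hE'.
rewrite hm' in hinc.
have hvq : v \in a :: q.
  case: (pe_inc hP hm0 hinc) => ->; apply: mem_nth => /=; by rewrite ltnS // ltnW.
move/mem_pathP: hv => [j hj hvi].
have [e' he' hinc'] : exists2 e', e' \in path_edges a' q' & incident e' v.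
  have [m2 hm2] : exists m2, m2 < size q' /\ ((j == m2) || (j == m2.+1)).
    case: (ltnP j (size q')) => h.
      by exists j; rewrite eqxx.
    have s1' : 0 < size q' by move: hq'; case: (q').
    have hi' : j = size q' by apply/eqP; rewrite eqn_leq hj h.
    exists j.-1; rewrite hi'; split; first by rewrite prednK.
    by rewrite prednK // eqxx orbT.
  case: hm2 => hm2a hm2b.
  exists (nth e (path_edges a' q') m2); first by rewrite mem_nth // (altp_size hP').
  rewrite hvi; exact: (pe_inc2 hP' e hm2a hm2b).
have [c' hc'] := altp_in hP' he'.
have he'E : e' \notin Ep.
  by move: hc'; rewrite /TP; case: (c'); rewrite !inE => /andP [].
have hc'2 : e' \in (if c' then D else F).
  by move: hc'; rewrite /TP; case: (c'); rewrite !inE => /andP [].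
move/negP: he'E; apply; rewrite inE.
exact: hcl hvq hc'2 hinc'.
Qed.

End Core2.

Section Match.
Variables (n : nat) (R : finType) (E : 'I_n -> R -> bool).
Local Notation edge := (edge n R).
Local Notation vert := (vert n R).

Lemma exposedP (M : {set edge}) (x : vert) e : exposed M x -> e \in M -> ~~ incident e x.
Proof. by move/forall_inP => H /H. Qed.

Lemma altp_ex (P : bool -> edge -> bool) b (x : vert) p : altp P b x p -> p != [::] ->
  exists e0 : edge, e0 \in path_edges x p.
Proof. case: p => // y p /=; case: edge_of => // e _ _; exists e; exact: mem_head. Qed.

Lemma aug_odd t M (x : vert) p : augmenting E t M x p -> odd (size p).
Proof.
case/and5P => hq hu hx hz; rewrite alternatingE => hP.
have [e0 _] := altp_ex hP hq.
have hs : 0 < size p by move: hq; case: (p).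
have hm : (size p).-1 < size p by rewrite prednK.
have := pe_type hP e0 hm => /andP [_ /eqP ht].
have hi := pe_inc2 hP e0 (i := size p) hm (ltac:(by rewrite prednK // eqxx orbT)).
rewrite nth_lastE in hi.
have := exposedP hz; rewrite /=.
case hin : (nth e0 (path_edges x p) (size p).-1 \in M).
  by move=> /(_ _ hin); rewrite hi.
move=> _; move: ht; rewrite hin /=; case: (size p) hs => // k _ /= <- //.
Qed.

Lemma aug_step t M (x : vert) p : is_matching E t M -> augmenting E t M x p ->
  is_matching E t (symdiff M [set e in path_edges x p]) /\
  #|symdiff M [set e in path_edges x p]| = #|M|.+1.
Proof.
move=> hM ha; have ho := aug_odd ha.
move: ha => /and5P [hq hu hx hz]; rewrite alternatingE => hP.
move/is_matchingP: hM => [rM hM].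
have hP' : altp (fun c e => (e \in M) == c) false x p.
  by apply: altp_mono hP => c e /andP [].
split.
- apply/is_matchingP; split.
    move=> e; rewrite in_symdiff inE; case hin: (e \in M); first by move=> _; exact: rM.
    move=> /= he; have [c /andP [h _]] := altp_in hP he; exact: h.
  apply: (symdiff_path_mpair hM hu hP') => e he /orP [] hi.
    by move: (exposedP hx he); rewrite hi.
  by move: (exposedP hz he); rewrite hi.
- have := card_symdiff_path M hu hP'.
  rewrite (@altp_count _ _ _ false x p (mem M) true _ hP') //=; last first.
    by move=> c e /eqP <-; case: (e \in M).
  lia.
Qed.

Lemma decomp t (M N : {set edge}) : is_matching E t M -> is_matching E t N -> #|M| < #|N| ->
  exists (x : vert) p, [/\ augmenting E t M x p,
    (forall e, e \in path_edges x p -> e \in symdiff M N),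
    (forall v e, v \in x :: p -> e \in symdiff M N -> incident e v -> e \in path_edges x p),
    is_matching E t (symdiff N [set e in path_edges x p]) &
    #|symdiff N [set e in path_edges x p]|.+1 = #|N|].
Proof.
move=> /is_matchingP [rM hM] /is_matchingP [rN hN] hlt.
set D := M :\: N; set F := N :\: M.
have hdis : forall e, e \in D -> e \in F -> False.
  by move=> e; rewrite !inE => /andP [h1 h2] /andP [h3 h4]; rewrite h2 in h3.
have hcard : #|D| < #|F|.
  rewrite /D /F !cardsD [N :&: M]setIC.
  have : #|M :&: N| <= #|M| by apply: subset_leq_card; apply: subsetIl.
  lia.
have [a [q [hq hu hP ho hcl]]] := core (leqnn #|F|)
  (mpair_sub (subsetDl M N) hM) (mpair_sub (subsetDl N M) hN) hdis hcard.
have hsym : forall e, (e \in symdiff M N) = (e \in D) || (e \in F).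
  move=> e; rewrite in_symdiff !inE.
  by case: (e \in M); case: (e \in N).
have [e0 _] := altp_ex hP hq.
have hs : 0 < size q by move: hq; case: (q).
have hcl' : forall v e, v \in a :: q -> e \in symdiff M N -> incident e v ->
    e \in path_edges a q.
  move=> v e hv; rewrite hsym => /orP [] he hi.
    by apply: (hcl v e true).
  by apply: (hcl v e false).
have endp : forall i0 m0, m0 < size q -> (i0 == m0) || (i0 == m0.+1) ->
    (forall m, m < size q -> (i0 == m) || (i0 == m.+1) -> m = m0) -> i0 <= size q ->
    nth e0 (path_edges a q) m0 \in F ->
    (forall e, e \in N -> incident e (nth a (a :: q) i0) -> e \in path_edges a q) /\
    (forall e, e \in M -> ~~ incident e (nth a (a :: q) i0)).
  move=> i0 m0 hm0 him0 huniq hi0 hf.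
  have hinc := pe_inc2 hP e0 hm0 him0.
  have hfN : nth e0 (path_edges a q) m0 \in N by move: hf; rewrite inE => /andP [].
  have hfM : nth e0 (path_edges a q) m0 \notin M by move: hf; rewrite inE => /andP [].
  have A1 : forall e, e \in N -> incident e (nth a (a :: q) i0) -> e = nth e0 (path_edges a q) m0.
    by move=> e he hi; exact: hN he hfN hi hinc.
  split.
    by move=> e he hi; rewrite (A1 e he hi) mem_nth // (altp_size hP).
  move=> e he; apply/negP => hi.
  case heN : (e \in N).
    by rewrite (A1 e heN hi) in he; rewrite he in hfM.
  have heD : e \in D by rewrite inE heN he.
  have hep := hcl (nth a (a :: q) i0) e true (ltac:(by apply: mem_nth; rewrite /= ?ltnS)) heD hi.
  have [m hm hme] := pes_nth hP e0 hep.
  rewrite hme in hi.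
  have := huniq m hm (pe_at hP hu hm hi0 hi) => em.
  by rewrite hme em in he; rewrite he in hfM.
have hF0 : nth e0 (path_edges a q) 0 \in F by have := pe_type hP e0 hs.
have hFz : nth e0 (path_edges a q) (size q).-1 \in F.
  have hm : (size q).-1 < size q by rewrite prednK.
  have := pe_type hP e0 hm; rewrite /TP /=.
  by case: (size q) ho hs => // k /= hk _; rewrite (negbTE hk).
have [N0 M0] := endp 0 0 hs (erefl true) (ltac:(by move=> m _; case: m)) (leq0n _) hF0.
have [Nz Mz] := endp (size q) (size q).-1 (ltac:(by rewrite prednK))
  (ltac:(by rewrite prednK // eqxx orbT)) (ltac:(move=> m hm h; lia)) (leqnn _) hFz.
rewrite /= in N0 M0; rewrite nth_lastE in Nz Mz.
have hPN : altp (fun c e => (e \in N) == c) true a q.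
  have := altp_neg hP; apply: altp_mono => c e; rewrite /TP; case: (c); rewrite /= inE.
    by case/andP => _ ->.
  by case/andP => /negPf ->.
exists a, q; split.
- rewrite /augmenting hq hu /=; apply/and3P; split.
  + by apply/forall_inP => e he; apply: M0.
  + by apply/forall_inP => e he; apply: Mz.
  + rewrite alternatingE; apply: altp_mono hP => c e; rewrite /TP.
    case: (c) => /=.
      by rewrite inE => /andP [h1 h2]; rewrite rM // h2.
    by rewrite /F inE => /andP [h1 h2]; rewrite rN // (negPf h1).
- by move=> e he; have [c hc] := altp_in hP he; rewrite hsym; move: hc; rewrite /TP; case: (c) => ->; rewrite ?orbT.
- exact: hcl'.
- apply/is_matchingP; split.
    move=> e; rewrite in_symdiff inE; case hin: (e \in N); first by move=> _; exact: rN.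
    move=> /= he; have [c hc] := altp_in hP he; move: hc; rewrite /TP.
    by case: (c); rewrite inE => /andP [_ h]; [exact: rM | exact: rN].
  apply: (symdiff_path_mpair hN hu hPN) => e he /orP [] hi; [exact: N0 | exact: Nz].
- have := card_symdiff_path N hu hPN.
  rewrite (@altp_count _ _ _ true a q (mem N) true _ hPN) //=; last first.
    by move=> c e /eqP <-; case: (e \in N).
  rewrite uphalf_half; lia.
Qed.

End Match.

Section Main.
Variables (n : nat) (R : finType) (E : 'I_n -> R -> bool).
Local Notation edge := (edge n R).
Local Notation vert := (vert n R).

Lemma vertex_edge (P : bool -> edge -> bool) b (x : vert) p v : altp P b x p -> p != [::] ->
  v \in x :: p -> exists2 e, e \in path_edges x p & incident e v.
Proof.
move=> hP hq /(mem_pathP) [i hi ->].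
have [e0 _] := altp_ex hP hq.
have hs : 0 < size p by move: hq; case: (p).
have [m [hm him]] : exists m, m < size p /\ ((i == m) || (i == m.+1)).
  case: (ltnP i (size p)) => h; first by exists i; rewrite eqxx.
  have hi' : i = size p by apply/eqP; rewrite eqn_leq hi h.
  exists i.-1; rewrite hi'; split; first by rewrite prednK.
  by rewrite prednK // eqxx orbT.
exists (nth e0 (path_edges x p) m); first by rewrite mem_nth // (altp_size hP).
exact: (pe_inc2 hP e0 hm him).
Qed.

Lemma aug_card t M (x : vert) p : augmenting E t M x p -> #|[set e in path_edges x p]| = size p.
Proof. case/and5P => _ hu _ _; rewrite alternatingE => hP; exact: card_pes hP hu. Qed.

Lemma aug_altp t M (x : vert) p : augmenting E t M x p -> altp (fun c e => (e \in M) == c) false x p.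
Proof. case/and5P => _ _ _ _; rewrite alternatingE; apply: altp_mono => c e /andP [] //. Qed.

Lemma matching_mono t M : is_matching E t M -> is_matching E t.+1 M.
Proof.
move/is_matchingP => [r h]; apply/is_matchingP; split => // e /r.
by rewrite /revealed => /andP [h1 ->]; rewrite andbT ltnW.
Qed.

Lemma alt_old t M b (x : vert) p (u : 'I_n) : nat_of_ord u = t -> inl u \notin x :: p ->
  alternating E t.+1 M b x p -> alternating E t M b x p.
Proof.
move=> hut; elim: p b x => //= y p IH b x hnin.
case he: edge_of => [e|] //.
case/and3P => hr hm ha; apply/and3P; split => //; last first.
  apply: IH => //; move: hnin; rewrite in_cons negb_or => /andP [_ ->] //.
move: hr; rewrite /revealed => /andP [h1 ->]; rewrite andbT.
have [_ _ _ Hv] := edge_ofP he.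
have hne : (e.1 : nat) != t.
  rewrite -hut; apply/negP => /eqP h; have eu : e.1 = u by apply: val_inj.
  move/negP: hnin; apply; rewrite -eu.
  case: (Hv (inl e.1) (ltac:(by rewrite /= eqxx))) => ->; by rewrite !inE eqxx ?orbT.
lia.
Qed.

Lemma aug_old t M (x : vert) p (u : 'I_n) : nat_of_ord u = t -> ~~ contains x p (inl u) ->
  augmenting E t.+1 M x p -> augmenting E t M x p.
Proof.
move=> hut hc /and5P [h1 h2 h3 h4 h5]; apply/and5P; split => //.
exact: alt_old hut hc h5.
Qed.

Lemma hk_lemma T (M : {set edge}) (u : vert) k (x : vert) p :
  is_matching E T M ->
  (forall x' p', augmenting E T M x' p' -> ~~ contains x' p' u -> k <= size p') ->
  augmenting E T M x p -> contains x p u ->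
  (forall x' p', augmenting E T M x' p' -> contains x' p' u -> size p <= size p') ->
  size p <= k ->
  forall x' p', augmenting E T (symdiff M [set e in path_edges x p]) x' p' -> k <= size p'.
Proof.
move=> hM hold ha hc hmin hsz x' p' hQ.
set EP := [set e in path_edges x p].
set M' := symdiff M EP.
have [hM' cM'] := aug_step hM ha.
set EQ := [set e in path_edges x' p'].
set N := symdiff M' EQ.
have [hN cN] := aug_step hM' hQ.
have [x1 [p1 [ha1 hs1 hcl1 hN1 cN1]]] := decomp hM hN (ltac:(rewrite cN cM'; lia)).
set N1 := symdiff N [set e in path_edges x1 p1].
have [x2 [p2 [ha2 hs2 _ _ _]]] := decomp hM hN1 (ltac:(move: cN1; rewrite cN cM'; lia)).
have f1 : forall e, e \in path_edges x1 p1 -> (e \in M) (+) (e \in N) = true.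
  by move=> e /hs1; rewrite in_symdiff.
have f2 : forall e, e \in path_edges x2 p2 ->
    (e \in M) (+) (e \in N) (+) (e \in path_edges x1 p1) = true.
  by move=> e /hs2; rewrite /N1 !in_symdiff !inE !addbA.
have disj : forall e, e \in path_edges x1 p1 -> e \in path_edges x2 p2 -> False.
  by move=> e h1 h2; move: (f2 e h2); rewrite (f1 e h1) h1.
have xMN : forall e, (e \in M) (+) (e \in N) = (e \in EP) (+) (e \in EQ).
  move=> e; rewrite /N /M' !in_symdiff.
  by case: (e \in M); case: (e \in EP); case: (e \in EQ).
have c12 : size p1 + size p2 <= size p + size p'.
  rewrite -(aug_card ha1) -(aug_card ha2) -(aug_card ha) -(aug_card hQ).
  have -> : #|[set e in path_edges x1 p1]| + #|[set e in path_edges x2 p2]| =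
      #|[set e in path_edges x1 p1] :|: [set e in path_edges x2 p2]|.
    rewrite cardsU.
    suff -> : [set e in path_edges x1 p1] :&: [set e in path_edges x2 p2] = set0.
      by rewrite cards0 subn0.
    apply/setP => e; rewrite !inE; apply/negP => /andP [h1 h2]; exact: disj h1 h2.
  apply: (@leq_trans #|symdiff M N|).
    apply: subset_leq_card; apply/subsetP => e; rewrite in_symdiff in_setU => /orP [] h; move: h; rewrite in_set => h.
      by rewrite f1.
    case h1: (e \in path_edges x1 p1); first by case: (disj e h1 h).
    by move: (f2 e h); rewrite h1 addbF.
  apply: (@leq_trans #|EP :|: EQ|).
    apply: subset_leq_card; apply/subsetP => e; rewrite in_symdiff xMN in_setU.
    by case: (e \in EP); case: (e \in EQ).
  by rewrite cardsU leq_subr.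
have notboth : ~~ contains x1 p1 u || ~~ contains x2 p2 u.
  rewrite -negb_and; apply/negP => /andP [h1 h2].
  have /and5P [hq2 _ _ _ _] := ha2.
  have [e he hi] := vertex_edge (aug_altp ha2) hq2 h2.
  have : e \in symdiff M N.
    rewrite in_symdiff; case h1': (e \in path_edges x1 p1); first by case: (disj e h1' he).
    by move: (f2 e he); rewrite h1' addbF.
  move=> hes; exact: disj (hcl1 u e h1 hes hi) he.
have b1 : size p <= size p1 /\ (~~ contains x1 p1 u -> k <= size p1).
  case hc1: (contains x1 p1 u); first by split => //; exact: (hmin _ _ ha1 hc1).
  by have hk' := hold _ _ ha1 (negbT hc1); split => //; exact: leq_trans hsz hk'.
have b2 : size p <= size p2 /\ (~~ contains x2 p2 u -> k <= size p2).
  case hc2: (contains x2 p2 u); first by split => //; exact: (hmin _ _ ha2 hc2).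
  by have hk' := hold _ _ ha2 (negbT hc2); split => //; exact: leq_trans hsz hk'.
case/orP: notboth => h.
  have h1 := (proj2 b1) h; have h2 := proj1 b2.
  by rewrite -(leq_add2l (size p)) addnC; apply: leq_trans c12; apply: leq_add.
have h1 := (proj2 b2) h; have h2 := proj1 b1.
by rewrite -(leq_add2l (size p)) addnC; apply: leq_trans c12; rewrite addnC; apply: leq_add.
Qed.

End Main.

Section Ratio.
Variables (n : nat) (R : finType) (E : 'I_n -> R -> bool).
Local Notation edge := (edge n R).
Local Notation vert := (vert n R).

Lemma ratio_lemma t (M : {set edge}) k : is_matching E t M ->
  (forall (x : vert) p, augmenting E t M x p -> k <= size p) ->
  forall N : {set edge}, is_matching E t N -> k./2 * (#|N| - #|M|) <= #|M :&: symdiff M N|.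
Proof.
move=> hM hk.
suff H : forall c (N : {set edge}), #|N| <= c -> is_matching E t N -> k./2 * (#|N| - #|M|) <= #|M :&: symdiff M N|.
  by move=> N; apply: H.
elim=> [|c IH] N hc hN.
  have -> : #|N| = 0 by apply/eqP; rewrite -leqn0.
  by rewrite sub0n muln0.
case: (leqP #|N| #|M|) => hNM.
  have -> : #|N| - #|M| = 0 by apply/eqP; rewrite subn_eq0.
  by rewrite muln0.
have [x [p [ha hs hcl hN' cN']]] := decomp hM hN hNM.
set EP := [set e in path_edges x p].
set N' := symdiff N EP.
have IH' := IH N' (ltac:(move: hc; rewrite -cN' ltnS //)) hN'.
have hsp := hk _ _ ha.
have hcnt : #|EP :&: M| = (size p)./2.
  have /and5P [_ hu _ _ _] := ha.
  rewrite (card_pesI (aug_altp ha) hu M).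
  rewrite (@altp_count _ _ _ false x p (mem M) true _ (aug_altp ha)) //=.
  by move=> c0 e /eqP <-; case: (e \in M).
have split1 : #|M :&: symdiff M N| = #|M :&: symdiff M N'| + #|EP :&: M|.
  rewrite -(cardsID EP (M :&: symdiff M N)) addnC; congr (_ + _); apply: eq_card => e.
  - rewrite !in_setD !in_setI /N' !in_symdiff.
    case hE: (e \in EP) => /=; last by rewrite addbF.
    have := hs e (ltac:(by move: hE; rewrite in_set)); rewrite in_symdiff. by move=> h; rewrite addbT addbN h andbF.
  - rewrite !in_setI; case hE: (e \in EP) => /=; rewrite ?andbF //.
    have := hs e (ltac:(by move: hE; rewrite in_set)) => ->.
    by rewrite !andbT.
have hd : #|N| - #|M| = (#|N'| - #|M|).+1 by rewrite -cN'; move: hNM; rewrite -cN' ltnS => h; rewrite subSn.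
rewrite hd mulnS split1 addnC; apply: leq_add => //.
rewrite hcnt; move: hsp; clear; lia.
Qed.

Lemma inv_run k (Ms : nat -> {set edge}) : 2 <= k -> alg_run E k Ms ->
  forall t, t <= n -> is_matching E t (Ms t) /\
    (forall (x : vert) p, augmenting E t (Ms t) x p -> k <= size p).
Proof.
move=> hk [h0 hstep]; elim=> [|t IH] ht.
  rewrite h0; split.
    by apply/is_matchingP; split => [e|e1 e2 v]; rewrite inE.
  move=> x p /and5P [hq _ _ _]; rewrite alternatingE.
  case: p hq => // y p _ /=; case: edge_of => // e /andP [/andP [/andP [] ]].
have ht' : t < n by [].
have [hM hI] := IH (ltnW ht).
have := hstep (Ordinal ht'); rewrite /alg_step /=.
case => [[x [p [ha hc hmin hsz ->]]] | [hno ->]].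
- have hM1 := matching_mono hM.
  split; first exact: (aug_step hM1 ha).1.
  apply: (hk_lemma hM1 _ ha hc hmin) => [x' p' ha' hc'|].
    by apply: hI; apply: (aug_old (u := Ordinal ht')) ha'.
  by move: hsz hk; clear; lia.
- split; first exact: matching_mono.
  move=> x p ha; case hc: (contains x p (inl (Ordinal ht'))).
    by have := hno _ _ ha hc; move: hk; clear; lia.
  by apply: hI; apply: (aug_old (u := Ordinal ht') _ (negbT hc) ha).
Qed.

End Ratio.

Local Open Scope ring_scope.

Theorem theorem1 (k : nat) (hk2 : (2 <= k)%N) (hkeven : ~~ odd k)
  (n : nat) (R : finType) (E : 'I_n -> R -> bool) (Ms : nat -> {set edge n R}) :
  alg_run E k Ms ->
  forall t : nat, (t <= n)%N ->
    (1 - 2%:R / (k + 2)%:R) * (OPT E t)%:R <= (#|Ms t|)%:R :> rat.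
Proof.
move=> hrun t ht.
have [hM hI] := inv_run hk2 hrun ht.
have h0 : is_matching E t set0.
  by apply/is_matchingP; split => [e|e1 e2 v]; rewrite inE.
have [N hN hO] : exists2 N, is_matching E t N & OPT E t = #|N|.
  exists [arg max_(N > set0 | is_matching E t N) #|N|]; last by rewrite /OPT (@bigop.bigmax_eq_arg _ set0 _ _ h0).
  by case: arg_maxnP.
have hr := ratio_lemma hM hI hN.
have hsub : (#|Ms t :&: symdiff (Ms t) N| <= #|Ms t|)%N by apply: subset_leq_card; apply: subsetIl.
have key : (k * #|N| <= (k + 2) * #|Ms t|)%N.
  move: hr hsub hkeven; clear; nia.
rewrite hO.
have hk0 : (0 : rat) < (k + 2)%:R by rewrite ltr0n addn2.
have -> : 1 - 2%:R / (k + 2)%:R = k%:R / (k + 2)%:R :> rat.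
  rewrite natrD; field; by rewrite -natrD pnatr_eq0 addn2.
rewrite mulrAC ler_pdivrMr // -!natrM ler_nat.
by rewrite (mulnC #|Ms t|).
Qed.
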